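(* Let $X=\ell_\infty^{(3)}$ over $\mathbb{C}$, $V=\{z\in X: z_1+z_2+z_3=0\}$, and define $P:X\to V$ by $Pz=z-\frac{z_1+z_2+z_3}{3}(1,1,1)$. Then $P\in\mathcal{P}(X,V)$, $\|P\|_w=\|P\|=4/3$, and $P$ has minimal numerical radius among all elements of $\mathcal{P}(X,V)$. However, $P$ is not a strongly unique minimal projection with respect to the numerical radius: there is no $r>0$ such that $\|Q\|_w\ge\|P\|_w+r\|Q-P\|_w$ for all $Q\in\mathcal{P}(X,V)$ (equivalently, $0$ is not a strongly unique best approximation to $P$ in $B_V(X,V)=\{L\in B(X,V):L|_V=0\}$ with respect to $\|\cdot\|_w$).
   Context: $\ell_\infty^{(3)}$ is $\mathbb{C}^3$ with the max norm. $\mathcal{P}(X,V)$ is the set of linear projections from $X$ onto $V$ (linear $Q:X\to V$ with $Qv=v$ for $v\in V$). For an operator $T$ on $X$, $\|T\|$ is the operator norm and $\|T\|_w=\sup\{|x^*(Tx)|:x\in S_X,x^*\in S_{X^*},x^*(x)=1\}$ the numerical radius. *)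

(* Defs.v *)
From Stdlib Require Import Reals Lra Classical ClassicalEpsilon.
Open Scope R_scope.

Definition C : Type := (R * R)%type.
Definition Cre (z : C) : R := fst z.
Definition Cim (z : C) : R := snd z.
Definition RtoC (r : R) : C := (r, 0).
Definition C0 : C := (0, 0).
Definition C1 : C := (1, 0).
Definition Cadd (z w : C) : C := (fst z + fst w, snd z + snd w).
Definition Copp (z : C) : C := (- fst z, - snd z).
Definition Csub (z w : C) : C := Cadd z (Copp w).
Definition Cmul (z w : C) : C :=
  (fst z * fst w - snd z * snd w, fst z * snd w + snd z * fst w).
Definition Cmod (z : C) : R := sqrt (fst z ^ 2 + snd z ^ 2).

Definition X : Type := (C * C * C)%type.
Definition x1 (x : X) : C := fst (fst x).
Definition x2 (x : X) : C := snd (fst x).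
Definition x3 (x : X) : C := snd x.
Definition mkX (a b c : C) : X := (a, b, c).
Definition Xadd (x y : X) : X := mkX (Cadd (x1 x) (x1 y)) (Cadd (x2 x) (x2 y)) (Cadd (x3 x) (x3 y)).
Definition Xsub (x y : X) : X := mkX (Csub (x1 x) (x1 y)) (Csub (x2 x) (x2 y)) (Csub (x3 x) (x3 y)).
Definition Xscal (a : C) (x : X) : X := mkX (Cmul a (x1 x)) (Cmul a (x2 x)) (Cmul a (x3 x)).
Definition normX (x : X) : R := Rmax (Cmod (x1 x)) (Rmax (Cmod (x2 x)) (Cmod (x3 x))).

(* Supremum of a set of reals (least upper bound; chosen classically,
   arbitrary if no least upper bound exists). *)
Definition Rsup (E : R -> Prop) : R := epsilon (inhabits 0) (fun l => is_lub E l).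

Definition is_linear_op (T : X -> X) : Prop :=
  (forall x y, T (Xadd x y) = Xadd (T x) (T y)) /\
  (forall a x, T (Xscal a x) = Xscal a (T x)).
Definition is_linear_fun (f : X -> C) : Prop :=
  (forall x y, f (Xadd x y) = Cadd (f x) (f y)) /\
  (forall a x, f (Xscal a x) = Cmul a (f x)).

Definition opnorm (T : X -> X) : R :=
  Rsup (fun r => exists x, normX x = 1 /\ r = normX (T x)).
Definition dualnorm (f : X -> C) : R :=
  Rsup (fun r => exists x, normX x = 1 /\ r = Cmod (f x)).
Definition numrad (T : X -> X) : R :=
  Rsup (fun r => exists (x : X) (f : X -> C),
           normX x = 1 /\ is_linear_fun f /\ dualnorm f = 1 /\ f x = C1 /\
           r = Cmod (f (T x))).

Definition inV (z : X) : Prop := Cadd (Cadd (x1 z) (x2 z)) (x3 z) = C0.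

Definition is_proj_onto_V (Q : X -> X) : Prop :=
  is_linear_op Q /\ (forall x, inV (Q x)) /\ (forall v, inV v -> Q v = v).

Definition Pmin (z : X) : X :=
  let s := Cmul (RtoC (1/3)) (Cadd (Cadd (x1 z) (x2 z)) (x3 z)) in
  Xsub z (mkX s s s).

Definition opsub (S T : X -> X) : X -> X := fun x => Xsub (S x) (T x).

(* Main.v *)
Require Import Defs.
From Stdlib Require Import Reals.
Open Scope R_scope.
From Stdlib Require Import Lra Psatz ClassicalEpsilon.

Lemma pair_eq {A B : Type} (a c : A) (b d : B) : a = c -> b = d -> (a, b) = (c, d).
Proof. intros -> ->; reflexivity. Qed.

Ltac peq := repeat apply pair_eq.

Lemma sqrt_le_of u v : 0 <= v -> u <= v * v -> sqrt u <= v.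
Proof. intros Hv Hu. rewrite <- (sqrt_square v Hv). apply sqrt_le_1_alt; lra. Qed.

Lemma sqrt_ge_of u v : 0 <= v -> v * v <= u -> v <= sqrt u.
Proof. intros Hv Hu. rewrite <- (sqrt_square v Hv). apply sqrt_le_1_alt; lra. Qed.

Lemma Cmod_pos z : 0 <= Cmod z.
Proof. apply sqrt_pos. Qed.

Lemma Cmod_sq z : Cmod z * Cmod z = fst z ^ 2 + snd z ^ 2.
Proof. unfold Cmod. apply sqrt_sqrt. nra. Qed.

Lemma Cmod_ge_fst z : fst z <= Cmod z.
Proof.
  destruct (Rle_lt_dec (fst z) 0). pose proof (Cmod_pos z); lra.
  unfold Cmod. apply sqrt_ge_of; nra.
Qed.

Lemma Cmod_ge_snd z : snd z <= Cmod z.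
Proof.
  destruct (Rle_lt_dec (snd z) 0). pose proof (Cmod_pos z); lra.
  unfold Cmod. apply sqrt_ge_of; nra.
Qed.

Lemma Cmod_ge_msnd z : - snd z <= Cmod z.
Proof.
  destruct (Rle_lt_dec (- snd z) 0). pose proof (Cmod_pos z); lra.
  unfold Cmod. apply sqrt_ge_of; nra.
Qed.

Lemma Cmod_mul z w : Cmod (Cmul z w) = Cmod z * Cmod w.
Proof.
  unfold Cmod, Cmul; simpl. rewrite <- sqrt_mult by nra. f_equal. ring.
Qed.

Lemma Cmod_add z w : Cmod (Cadd z w) <= Cmod z + Cmod w.
Proof.
  pose proof (Cmod_sq z). pose proof (Cmod_sq w).
  pose proof (Cmod_pos z). pose proof (Cmod_pos w).
  destruct z as [a b], w as [c d]. simpl in *.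
  unfold Cmod at 1, Cadd; simpl. apply sqrt_le_of; [lra|].
  set (p := Cmod (a,b)) in *. set (q := Cmod (c,d)) in *.
assert (Hs: (a*c+b*d)*(a*c+b*d) <= (p*q)*(p*q)).
  { replace ((p*q)*(p*q)) with ((p*p)*(q*q)) by ring. rewrite H, H0.
    pose proof (pow2_ge_0 (a*d-b*c)). nra. }
  assert (a*c+b*d <= p*q).
  { destruct (Rle_lt_dec (a*c+b*d) 0). pose proof (Rmult_le_pos _ _ H1 H2). lra.
    destruct (Rle_lt_dec (a*c+b*d) (p*q)); auto.
    pose proof (Rmult_le_pos _ _ H1 H2).
    assert (0 < (a*c+b*d - p*q)*(a*c+b*d+p*q)) by (apply Rmult_lt_0_compat; lra).
    nra. }
  nra.
Qed.

Lemma Cmod_le z c : 0 <= c -> fst z ^ 2 + snd z ^ 2 <= c * c -> Cmod z <= c.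
Proof. intros; unfold Cmod; apply sqrt_le_of; auto. Qed.

Lemma Cmod_real a : Cmod (a, 0) = Rabs a.
Proof. unfold Cmod; simpl. rewrite <- sqrt_Rsqr_abs. f_equal. unfold Rsqr. ring. Qed.

Lemma Cmod_C1 : Cmod Defs.C1 = 1.
Proof. unfold Defs.C1. rewrite Cmod_real. apply Rabs_R1. Qed.
Lemma Cmod_C0 : Cmod Defs.C0 = 0.
Proof. unfold Defs.C0. rewrite Cmod_real. apply Rabs_R0. Qed.

Lemma normX_1 x : Cmod (x1 x) <= normX x.
Proof. unfold normX. apply Rmax_l. Qed.
Lemma normX_2 x : Cmod (x2 x) <= normX x.
Proof. unfold normX. eapply Rle_trans; [apply Rmax_l|apply Rmax_r]. Qed.
Lemma normX_3 x : Cmod (x3 x) <= normX x.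
Proof. unfold normX. eapply Rle_trans; [apply Rmax_r|apply Rmax_r]. Qed.
Lemma normX_pos x : 0 <= normX x.
Proof. eapply Rle_trans; [apply Cmod_pos|apply (normX_1 x)]. Qed.

Lemma normX_le x B : Cmod (x1 x) <= B -> Cmod (x2 x) <= B -> Cmod (x3 x) <= B -> normX x <= B.
Proof. intros; unfold normX; repeat apply Rmax_lub; auto. Qed.

Lemma normX_add x y : normX (Xadd x y) <= normX x + normX y.
Proof.
  apply normX_le; simpl; eapply Rle_trans; try apply Cmod_add.
  - pose proof (normX_1 x); pose proof (normX_1 y); lra.
  - pose proof (normX_2 x); pose proof (normX_2 y); lra.
  - pose proof (normX_3 x); pose proof (normX_3 y); lra.
Qed.

Lemma normX_scal c x : normX (Xscal c x) = Cmod c * normX x.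
Proof.
  unfold normX, Xscal, mkX, x1, x2, x3; simpl. rewrite !Cmod_mul.
  rewrite !RmaxRmult by apply Cmod_pos. reflexivity.
Qed.

Definition e1 : X := mkX Defs.C1 Defs.C0 Defs.C0.
Definition e2 : X := mkX Defs.C0 Defs.C1 Defs.C0.
Definition e3 : X := mkX Defs.C0 Defs.C0 Defs.C1.

Lemma decomp x : x = Xadd (Xadd (Xscal (x1 x) e1) (Xscal (x2 x) e2)) (Xscal (x3 x) e3).
Proof.
  destruct x as [[[a1 a2] [b1 b2]] [c1 c2]].
  unfold Xadd, Xscal, mkX, e1, e2, e3, x1, x2, x3, Cadd, Cmul, Defs.C1, Defs.C0; simpl.
  peq; ring.
Qed.
Lemma op_decomp T : is_linear_op T -> forall x,
  T x = Xadd (Xadd (Xscal (x1 x) (T e1)) (Xscal (x2 x) (T e2))) (Xscal (x3 x) (T e3)).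
Proof.
  intros [Ha Hs] x. rewrite (decomp x) at 1. rewrite !Ha, !Hs. reflexivity.
Qed.

Lemma fun_decomp f : is_linear_fun f -> forall x,
  f x = Cadd (Cadd (Cmul (x1 x) (f e1)) (Cmul (x2 x) (f e2))) (Cmul (x3 x) (f e3)).
Proof.
  intros [Ha Hs] x. rewrite (decomp x) at 1. rewrite !Ha, !Hs. reflexivity.
Qed.

Lemma op_bounded T : is_linear_op T -> forall x,
  normX (T x) <= normX x * (normX (T e1) + normX (T e2) + normX (T e3)).
Proof.
  intros HT x. rewrite (op_decomp T HT x).
  eapply Rle_trans; [apply normX_add|].
  eapply Rle_trans; [apply Rplus_le_compat_r; apply normX_add|].
  rewrite !normX_scal.
  pose proof (normX_1 x); pose proof (normX_2 x); pose proof (normX_3 x).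
  pose proof (normX_pos (T e1)); pose proof (normX_pos (T e2)); pose proof (normX_pos (T e3)).
  pose proof (Rmult_le_compat_r _ _ _ H2 H).
  pose proof (Rmult_le_compat_r _ _ _ H3 H0).
  pose proof (Rmult_le_compat_r _ _ _ H4 H1).
  lra.
Qed.

Lemma fun_bounded f : is_linear_fun f -> forall x,
  Cmod (f x) <= normX x * (Cmod (f e1) + Cmod (f e2) + Cmod (f e3)).
Proof.
  intros Hf x. rewrite (fun_decomp f Hf x).
  eapply Rle_trans; [apply Cmod_add|].
  eapply Rle_trans; [apply Rplus_le_compat_r; apply Cmod_add|].
  rewrite !Cmod_mul.
  pose proof (normX_1 x); pose proof (normX_2 x); pose proof (normX_3 x).
  pose proof (Cmod_pos (f e1)); pose proof (Cmod_pos (f e2)); pose proof (Cmod_pos (f e3)).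
  pose proof (Rmult_le_compat_r _ _ _ H2 H).
  pose proof (Rmult_le_compat_r _ _ _ H3 H0).
  pose proof (Rmult_le_compat_r _ _ _ H4 H1).
  lra.
Qed.

Lemma Rsup_lub (E : R -> Prop) : (exists x, E x) -> (exists M, forall x, E x -> x <= M) ->
  is_lub E (Rsup E).
Proof.
  intros Hne [M HM]. unfold Rsup. apply epsilon_spec.
  destruct (completeness E) as [m Hm]; [exists M; exact HM | exact Hne | eauto].
Qed.

Definition one3 : X := mkX Defs.C1 Defs.C1 Defs.C1.
Lemma normX_one3 : normX one3 = 1.
Proof. unfold normX, one3, mkX, x1, x2, x3; cbn [fst snd]. rewrite Cmod_C1. unfold Rmax; repeat destruct Rle_dec; lra. Qed.

Lemma dualnorm_lub f : is_linear_fun f ->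
  is_lub (fun r => exists x, normX x = 1 /\ r = Cmod (f x)) (dualnorm f).
Proof.
  intros Hf. apply Rsup_lub.
  - exists (Cmod (f one3)). exists one3. split; auto. apply normX_one3.
  - exists (Cmod (f e1) + Cmod (f e2) + Cmod (f e3)). intros r [x [Hx ->]].
    pose proof (fun_bounded f Hf x). rewrite Hx in H. lra.
Qed.

Lemma normX_zero x : normX x = 0 -> x = (Defs.C0, Defs.C0, Defs.C0).
Proof.
  intros H. pose proof (normX_1 x); pose proof (normX_2 x); pose proof (normX_3 x).
  pose proof (Cmod_sq (x1 x)); pose proof (Cmod_sq (x2 x)); pose proof (Cmod_sq (x3 x)).
  pose proof (Cmod_pos (x1 x)); pose proof (Cmod_pos (x2 x)); pose proof (Cmod_pos (x3 x)).
  destruct x as [[[a1 a2] [b1 b2]] [c1 c2]]. unfold x1, x2, x3, Defs.C0 in *; simpl in *.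
  assert (a1 = 0) by nra. assert (a2 = 0) by nra. assert (b1 = 0) by nra.
  assert (b2 = 0) by nra. assert (c1 = 0) by nra. assert (c2 = 0) by nra.
  subst. reflexivity.
Qed.

Lemma fun_zero f : is_linear_fun f -> f (Defs.C0, Defs.C0, Defs.C0) = Defs.C0.
Proof.
  intros [Ha Hs].
  assert (E : (Defs.C0, Defs.C0, Defs.C0) = Xscal Defs.C0 (Defs.C0, Defs.C0, Defs.C0)).
  { unfold Xscal, mkX, Cmul, Defs.C0, x1,x2,x3; simpl. peq; ring. }
  rewrite E, Hs. unfold Cmul, Defs.C0; simpl. peq; ring.
Qed.

Lemma dualnorm_bound f : is_linear_fun f -> forall y, Cmod (f y) <= dualnorm f * normX y.
Proof.
  intros Hf y. destruct (dualnorm_lub f Hf) as [Hub _].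
  destruct (Req_dec (normX y) 0) as [H0|H0].
  - rewrite H0, (normX_zero y H0), fun_zero, Cmod_C0 by auto. lra.
  - pose proof (normX_pos y). set (n := normX y) in *.
    assert (Hn : 0 < n) by lra.
    set (z := Xscal (RtoC (/ n)) y).
    assert (Hz : normX z = 1).
    { unfold z. rewrite normX_scal. unfold RtoC. rewrite Cmod_real.
      rewrite Rabs_right by (left; apply Rinv_0_lt_compat; lra). fold n. field. lra. }
    assert (Hfz : Cmod (f z) = / n * Cmod (f y)).
    { unfold z. destruct Hf as [_ Hs]. rewrite Hs, Cmod_mul. unfold RtoC. rewrite Cmod_real.
      rewrite Rabs_right by (left; apply Rinv_0_lt_compat; lra). reflexivity. }
    assert (Cmod (f z) <= dualnorm f) by (apply Hub; exists z; auto).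
    rewrite Hfz in H1.
    apply (Rmult_le_compat_l n) in H1; [|lra].
    rewrite <- Rmult_assoc, Rinv_r in H1 by lra. lra.
Qed.

Lemma coord1_lin : is_linear_fun x1. Proof. split; reflexivity. Qed.
Lemma coord2_lin : is_linear_fun x2. Proof. split; reflexivity. Qed.
Lemma coord3_lin : is_linear_fun x3. Proof. split; reflexivity. Qed.

Lemma lub_unique E a b : is_lub E a -> is_lub E b -> a = b.
Proof. intros [Ha Ha'] [Hb Hb']. apply Rle_antisym; auto. Qed.

Lemma dualnorm_coord f : is_linear_fun f -> f one3 = Defs.C1 ->
  (forall x, Cmod (f x) <= normX x) -> dualnorm f = 1.
Proof.
  intros Hf H1 Hb. apply (lub_unique _ _ _ (dualnorm_lub f Hf)). split.
  - intros r [x [Hx ->]]. rewrite <- Hx. apply Hb.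
  - intros b Hbb. apply Hbb. exists one3. rewrite H1, Cmod_C1, normX_one3. auto.
Qed.

Lemma dualnorm_x1 : dualnorm x1 = 1.
Proof. apply dualnorm_coord; [apply coord1_lin|reflexivity|apply normX_1]. Qed.
Lemma dualnorm_x2 : dualnorm x2 = 1.
Proof. apply dualnorm_coord; [apply coord2_lin|reflexivity|apply normX_2]. Qed.
Lemma dualnorm_x3 : dualnorm x3 = 1.
Proof. apply dualnorm_coord; [apply coord3_lin|reflexivity|apply normX_3]. Qed.

Definition NRset (T : X -> X) := fun r : R => exists (x : X) (f : X -> Defs.C),
           normX x = 1 /\ is_linear_fun f /\ dualnorm f = 1 /\ f x = Defs.C1 /\
           r = Cmod (f (T x)).

Lemma NR_elem_le (T : X -> X) x f : is_linear_fun f -> dualnorm f = 1 ->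
  Cmod (f (T x)) <= normX (T x).
Proof. intros Hf Hd. pose proof (dualnorm_bound f Hf (T x)). rewrite Hd in H. lra. Qed.

Lemma numrad_lub T : is_linear_op T -> is_lub (NRset T) (numrad T).
Proof.
  intros HT. unfold numrad; fold (NRset T). apply Rsup_lub.
  - exists (Cmod (x1 (T one3))). exists one3, x1.
    repeat split; try reflexivity. apply normX_one3. apply dualnorm_x1.
  - exists (normX (T e1) + normX (T e2) + normX (T e3)).
    intros r [x [f [Hx [Hf [Hd [Hfx ->]]]]]].
    pose proof (NR_elem_le T x f Hf Hd). pose proof (op_bounded T HT x).
    rewrite Hx in H0. lra.
Qed.

Lemma numrad_le T B : is_linear_op T -> (forall x, normX x = 1 -> normX (T x) <= B) ->
  numrad T <= B.
Proof.
  intros HT HB. destruct (numrad_lub T HT) as [_ H]. apply H.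
  intros r [x [f [Hx [Hf [Hd [Hfx ->]]]]]].
  pose proof (NR_elem_le T x f Hf Hd). pose proof (HB x Hx). lra.
Qed.

Lemma numrad_ge T x f : is_linear_op T -> normX x = 1 -> is_linear_fun f -> dualnorm f = 1 ->
  f x = Defs.C1 -> Cmod (f (T x)) <= numrad T.
Proof.
  intros HT Hx Hf Hd Hfx. destruct (numrad_lub T HT) as [H _]. apply H.
  exists x, f. exact (conj Hx (conj Hf (conj Hd (conj Hfx eq_refl)))).
Qed.
Ltac xunf := unfold Xadd, Xsub, Xscal, mkX, x1, x2, x3, Cadd, Csub, Copp, Cmul, RtoC, Defs.C0, Defs.C1 in *.

Lemma comb_bound a b c x : Cmod (Cadd (Cadd (Cmul a (x1 x)) (Cmul b (x2 x))) (Cmul c (x3 x)))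
  <= (Cmod a + Cmod b + Cmod c) * normX x.
Proof.
  eapply Rle_trans; [apply Cmod_add|].
  eapply Rle_trans; [apply Rplus_le_compat_r; apply Cmod_add|].
  rewrite !Cmod_mul.
  pose proof (normX_1 x); pose proof (normX_2 x); pose proof (normX_3 x).
  pose proof (Cmod_pos a); pose proof (Cmod_pos b); pose proof (Cmod_pos c).
  pose proof (Rmult_le_compat_l _ _ _ H2 H).
  pose proof (Rmult_le_compat_l _ _ _ H3 H0).
  pose proof (Rmult_le_compat_l _ _ _ H4 H1).
  lra.
Qed.

Lemma Pmin_lin : is_linear_op Pmin.
Proof.
  split.
  - intros [[[a1 a2] [b1 b2]] [c1 c2]] [[[d1 d2] [f1 f2]] [g1 g2]].
    unfold Pmin; xunf; simpl; peq; cbn [fst snd]; field.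
  - intros [k1 k2] [[[a1 a2] [b1 b2]] [c1 c2]].
    unfold Pmin; xunf; simpl; peq; cbn [fst snd]; field.
Qed.

Lemma Pmin_proj : is_proj_onto_V Pmin.
Proof.
  split; [apply Pmin_lin|split].
  - intros [[[a1 a2] [b1 b2]] [c1 c2]]. unfold inV, Pmin; xunf; simpl; peq; cbn [fst snd]; field.
  - intros [[[a1 a2] [b1 b2]] [c1 c2]] Hv. unfold inV in Hv; unfold Pmin; xunf; simpl in *.
    injection Hv; intros. peq; cbn [fst snd]; field_simplify; lra.
Qed.

Lemma Pmin_c1 x : x1 (Pmin x) = Cadd (Cadd (Cmul (2/3,0) (x1 x)) (Cmul (-1/3,0) (x2 x))) (Cmul (-1/3,0) (x3 x)).
Proof. destruct x as [[[a1 a2] [b1 b2]] [c1 c2]]. unfold Pmin; xunf; simpl; peq; cbn [fst snd]; field. Qed.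
Lemma Pmin_c2 x : x2 (Pmin x) = Cadd (Cadd (Cmul (-1/3,0) (x1 x)) (Cmul (2/3,0) (x2 x))) (Cmul (-1/3,0) (x3 x)).
Proof. destruct x as [[[a1 a2] [b1 b2]] [c1 c2]]. unfold Pmin; xunf; simpl; peq; cbn [fst snd]; field. Qed.
Lemma Pmin_c3 x : x3 (Pmin x) = Cadd (Cadd (Cmul (-1/3,0) (x1 x)) (Cmul (-1/3,0) (x2 x))) (Cmul (2/3,0) (x3 x)).
Proof. destruct x as [[[a1 a2] [b1 b2]] [c1 c2]]. unfold Pmin; xunf; simpl; peq; cbn [fst snd]; field. Qed.

Lemma Rabs_c a : Rabs a = Rmax a (-a).
Proof. unfold Rabs, Rmax; destruct Rcase_abs; destruct Rle_dec; lra. Qed.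

Ltac cmods := rewrite ?Cmod_real, ?Rabs_c; unfold Rmax; repeat destruct Rle_dec; lra.

Lemma Pmin_bound x : normX (Pmin x) <= 4/3 * normX x.
Proof.
  apply normX_le; [rewrite Pmin_c1|rewrite Pmin_c2|rewrite Pmin_c3];
  (eapply Rle_trans; [apply comb_bound|]); apply Rmult_le_compat_r; try apply normX_pos; cmods.
Qed.

Definition w1 : X := mkX (1,0) (-1,0) (-1,0).
Definition w2 : X := mkX (-1,0) (1,0) (-1,0).
Definition w3 : X := mkX (-1,0) (-1,0) (1,0).

Ltac normc := unfold normX; xunf; cbn [fst snd]; cmods.

Lemma normX_w1 : normX w1 = 1. Proof. unfold w1; normc. Qed.
Lemma normX_w2 : normX w2 = 1. Proof. unfold w2; normc. Qed.
Lemma normX_w3 : normX w3 = 1. Proof. unfold w3; normc. Qed.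

Lemma Pmin_w1 : Cmod (x1 (Pmin w1)) = 4/3.
Proof. rewrite Pmin_c1. unfold w1; xunf; cbn [fst snd].
  match goal with |- Cmod ?z = _ => replace z with (4/3, 0) by (peq; field) end.
  rewrite Cmod_real. apply Rabs_right. lra. Qed.
Lemma numrad_Pmin : numrad Pmin = 4/3.
Proof.
  apply Rle_antisym.
  - apply numrad_le; [apply Pmin_lin|]. intros x Hx. pose proof (Pmin_bound x). lra.
  - rewrite <- Pmin_w1. apply numrad_ge; auto using Pmin_lin, normX_w1, coord1_lin, dualnorm_x1.
Qed.

Lemma opnorm_Pmin : opnorm Pmin = 4/3.
Proof.
  assert (H : is_lub (fun r => exists x, normX x = 1 /\ r = normX (Pmin x)) (opnorm Pmin)).
  { apply Rsup_lub.
    - exists (normX (Pmin w1)). exists w1. split; auto. apply normX_w1.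
    - exists (4/3). intros r [x [Hx ->]]. pose proof (Pmin_bound x). lra. }
  destruct H as [Hub Hl]. apply Rle_antisym.
  - apply Hl. intros r [x [Hx ->]]. pose proof (Pmin_bound x). lra.
  - pose proof (normX_1 (Pmin w1)). rewrite Pmin_w1 in H.
    eapply Rle_trans; [exact H|]. apply Hub. exists w1. split; auto. apply normX_w1.
Qed.

Lemma Q_fact Q w e (i : X -> R) : is_proj_onto_V Q -> inV (Xadd w e) ->
  i (Xadd (Q w) (Q e)) = i (Xadd w e).
Proof.
  intros [[Ha _] [_ Hid]] Hv. rewrite <- Ha, Hid; auto.
Qed.

Lemma minimal Q : is_proj_onto_V Q -> 4/3 <= numrad Q.
Proof.
  intros HQ. pose proof HQ as [HL [HV _]].
  assert (V1 : inV (Xadd w1 e1)) by (unfold inV, w1, e1; xunf; cbn [fst snd]; peq; lra).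
  assert (V2 : inV (Xadd w2 e1)) by (unfold inV, w2, e1; xunf; cbn [fst snd]; peq; lra).
  assert (V3 : inV (Xadd w3 e1)) by (unfold inV, w3, e1; xunf; cbn [fst snd]; peq; lra).
  pose proof (Q_fact Q w1 e1 (fun z => fst (x1 z)) HQ V1) as F1.
  pose proof (Q_fact Q w2 e1 (fun z => fst (x2 z)) HQ V2) as F2.
  pose proof (Q_fact Q w3 e1 (fun z => fst (x3 z)) HQ V3) as F3.
  pose proof (f_equal fst (HV e1)) as S.
  cbv beta in F1, F2, F3. unfold Xadd at 2 in F1. unfold Xadd at 2 in F2. unfold Xadd at 2 in F3.
  unfold Xadd, w1, w2, w3, e1, mkX, x1, x2, x3, Cadd, Defs.C0, Defs.C1 in F1, F2, F3.
  unfold inV, Cadd, Defs.C0 in S. cbn [fst snd] in F1, F2, F3, S.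
  pose proof (Cmod_ge_fst (x1 (Q w1))). pose proof (Cmod_ge_fst (x2 (Q w2))).
  pose proof (Cmod_ge_fst (x3 (Q w3))).
  pose proof (numrad_ge Q w1 x1 HL normX_w1 coord1_lin dualnorm_x1 eq_refl).
  pose proof (numrad_ge Q w2 x2 HL normX_w2 coord2_lin dualnorm_x2 eq_refl).
  pose proof (numrad_ge Q w3 x3 HL normX_w3 coord3_lin dualnorm_x3 eq_refl).
  change (1, 0, (-1, 0), (-1, 0)) with w1 in F1.
  change (-1, 0, (1, 0), (-1, 0)) with w2 in F2.
  change (-1, 0, (-1, 0), (1, 0)) with w3 in F3.
  change (1, 0, (0, 0), (0, 0)) with e1 in F1, F2, F3.
  unfold x1, x2, x3 in *.
  lra.
Qed.
Definition Q5 (e : R) (z : X) : X :=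
  Xsub z (Xscal (Cadd (Cadd (x1 z) (x2 z)) (x3 z)) (mkX (1/3, e) (1/3, -e) (1/3, 0))).

Lemma Q5_lin e : is_linear_op (Q5 e).
Proof.
  split.
  - intros [[[a1 a2] [b1 b2]] [c1 c2]] [[[d1 d2] [f1 f2]] [g1 g2]].
    unfold Q5; xunf; simpl; peq; cbn [fst snd]; ring.
  - intros [k1 k2] [[[a1 a2] [b1 b2]] [c1 c2]].
    unfold Q5; xunf; simpl; peq; cbn [fst snd]; ring.
Qed.

Lemma Q5_proj e : is_proj_onto_V (Q5 e).
Proof.
  split; [apply Q5_lin|split].
  - intros [[[a1 a2] [b1 b2]] [c1 c2]]. unfold inV, Q5; xunf; simpl; peq; cbn [fst snd]; field.
  - intros v Hv. unfold inV in Hv. unfold Q5. rewrite Hv.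
    destruct v as [[[a1 a2] [b1 b2]] [c1 c2]]. xunf; simpl; peq; cbn [fst snd]; ring.
Qed.

Lemma opsub_lin S T : is_linear_op S -> is_linear_op T -> is_linear_op (opsub S T).
Proof.
  intros [Sa Ss] [Ta Ts]. unfold opsub. split.
  - intros x y. rewrite Sa, Ta.
    destruct (S x) as [[[a1 a2] [b1 b2]] [c1 c2]], (S y) as [[[d1 d2] [f1 f2]] [g1 g2]].
    destruct (T x) as [[[h1 h2] [i1 i2]] [j1 j2]], (T y) as [[[k1 k2] [l1 l2]] [m1 m2]].
    xunf; simpl; peq; cbn [fst snd]; ring.
  - intros c x. rewrite Ss, Ts. destruct c as [q1 q2].
    destruct (S x) as [[[a1 a2] [b1 b2]] [c1 c2]], (T x) as [[[h1 h2] [i1 i2]] [j1 j2]].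
    xunf; simpl; peq; cbn [fst snd]; ring.
Qed.

Lemma Q5_c1 e x : x1 (Q5 e x) = Cadd (Cadd (Cmul (2/3,-e) (x1 x)) (Cmul (-1/3,-e) (x2 x))) (Cmul (-1/3,-e) (x3 x)).
Proof. destruct x as [[[a1 a2] [b1 b2]] [c1 c2]]. unfold Q5; xunf; simpl; peq; cbn [fst snd]; field. Qed.
Lemma Q5_c2 e x : x2 (Q5 e x) = Cadd (Cadd (Cmul (-1/3,e) (x1 x)) (Cmul (2/3,e) (x2 x))) (Cmul (-1/3,e) (x3 x)).
Proof. destruct x as [[[a1 a2] [b1 b2]] [c1 c2]]. unfold Q5; xunf; simpl; peq; cbn [fst snd]; field. Qed.
Lemma Q5_c3 e x : x3 (Q5 e x) = Cadd (Cadd (Cmul (-1/3,0) (x1 x)) (Cmul (-1/3,0) (x2 x))) (Cmul (2/3,0) (x3 x)).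
Proof. destruct x as [[[a1 a2] [b1 b2]] [c1 c2]]. unfold Q5; xunf; simpl; peq; cbn [fst snd]; field. Qed.

Lemma cm_big e : Cmod (2/3, e) <= 2/3 + 3/4 * e^2.
Proof. apply Cmod_le; cbn [fst snd]; nra. Qed.
Lemma cm_big' e : Cmod (2/3, -e) <= 2/3 + 3/4 * e^2.
Proof. apply Cmod_le; cbn [fst snd]; nra. Qed.
Lemma cm_small e : Cmod (-1/3, e) <= 1/3 + 3/2 * e^2.
Proof. apply Cmod_le; cbn [fst snd]; nra. Qed.
Lemma cm_small' e : Cmod (-1/3, -e) <= 1/3 + 3/2 * e^2.
Proof. apply Cmod_le; cbn [fst snd]; nra. Qed.
Lemma cm_r a : Cmod (a, 0) <= Rabs a.
Proof. rewrite Cmod_real; lra. Qed.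

Lemma Q5_bound e x : normX x = 1 -> normX (Q5 e x) <= 4/3 + 15/4 * e^2.
Proof.
  intros Hx. pose proof (pow2_ge_0 e).
  apply normX_le; [rewrite Q5_c1|rewrite Q5_c2|rewrite Q5_c3];
  (eapply Rle_trans; [apply comb_bound|]); rewrite Hx, Rmult_1_r.
  - pose proof (cm_big' e). pose proof (cm_small' e). lra.
  - pose proof (cm_big e). pose proof (cm_small e). lra.
  - rewrite !Cmod_real, !Rabs_c. unfold Rmax; repeat destruct Rle_dec; lra.
Qed.

Lemma Q5_diff e : 0 <= e -> 3 * e <= numrad (opsub (Q5 e) Pmin).
Proof.
  intros He.
  eapply Rle_trans; [|apply (numrad_ge _ one3 x1 (opsub_lin _ _ (Q5_lin e) Pmin_lin)
       normX_one3 coord1_lin dualnorm_x1 eq_refl)].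
  eapply Rle_trans; [|apply Cmod_ge_msnd].
  unfold opsub, Q5, Pmin, one3; xunf; cbn [fst snd]; unfold Cadd; cbn [fst snd]. lra.
Qed.
Theorem mainTheorem8 :
  is_proj_onto_V Pmin /\
  numrad Pmin = 4/3 /\ opnorm Pmin = 4/3 /\
  (forall Q, is_proj_onto_V Q -> numrad Pmin <= numrad Q) /\
  ~ (exists r : R, 0 < r /\
       forall Q, is_proj_onto_V Q ->
         numrad Q >= numrad Pmin + r * numrad (opsub Q Pmin)).
Proof.
  split; [apply Pmin_proj|]. split; [apply numrad_Pmin|]. split; [apply opnorm_Pmin|].
  split.
  - intros Q HQ. rewrite numrad_Pmin. apply minimal; auto.
  - intros [r [Hr H]]. set (e := r / 2).
    pose proof (H (Q5 e) (Q5_proj e)) as H1.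
    pose proof (numrad_le (Q5 e) _ (Q5_lin e) (Q5_bound e)) as H2.
    assert (He : 0 <= e) by (unfold e; lra).
    pose proof (Q5_diff e He) as H3.
    rewrite numrad_Pmin in H1.
    pose proof (Rmult_le_compat_l r _ _ (Rlt_le _ _ Hr) H3).
    unfold e in *. nra.
Qed.
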